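(* For online Facility Location with $\Delta$-MRF arrivals, there are instances (with $\Delta\to\infty$) for which no online algorithm is better than $\Omega(\Delta/\log\Delta)$-competitive.
   Context: Facility Location: clients (demands) are points of a metric space; a solution opens facilities at points (each with an opening cost) and connects each client to an open facility at cost equal to their distance; cost is total opening plus connection cost. Online: clients arrive one by one and after each arrival the algorithm irrevocably opens facilities/makes connections so all clients so far are served. $\Delta$-MRF arrivals: the sequence of $n$ clients $Y=(Y_1,\dots,Y_n)$ is drawn from a known distribution on $\Omega_1\times\dots\times\Omega_n$ of the form $\Pr[u]\propto\exp(\sum_i\psi_i(u_i)+\sum_{e\in E'}\psi_e((u_j)_{j\in e}))$ for a hypergraph $E'\subseteq2^{[n]}$ and potentials, whose weighted maximum degree $\max_i\max_u|\sum_{e\ni i}\psi_e((u_j)_{j\in e})|$ is $\Delta$. An algorithm is $\alpha$-competitive if $\mathbb{E}[\mathrm{ALG}(Y)]\le\alpha\,\mathbb{E}[\mathrm{OPT}(Y)]$. *)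

(* Defs.v *)
From HB Require Import structures.
From mathcomp Require Import all_boot all_order all_algebra.
From mathcomp Require Import all_classical all_reals all_analysis.
Set Implicit Arguments. Unset Strict Implicit. Unset Printing Implicit Defensive.
Import Order.TTheory GRing.Theory Num.Theory.
Local Open Scope ring_scope.

Section FL.
Variables (R : realType) (T : finType) (n : nat).

Notation arrivals := {ffun 'I_n -> T}.

Definition is_metric (d : T -> T -> R) : Prop :=
  [/\ (forall x y, 0 <= d x y),
      (forall x y, d x y = 0 <-> x = y),
      (forall x y, d x y = d y x) &
      (forall x y z, d x z <= d x y + d y z)].

(* After the arrival of client t it has
   opened the (cumulative) set [opened u t] of facilities and irrevocably
   connected client t to [conn u t]; both may depend only on u_0 ... u_t. *)
Record online_alg := OnlineAlg {
  opened : arrivals -> 'I_n -> {set T};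
  conn : arrivals -> 'I_n -> T;
  alg_causal : forall (u v : arrivals) (t : 'I_n),
    (forall s : 'I_n, (s <= t)%N -> u s = v s) ->
    opened u t = opened v t /\ conn u t = conn v t;
  alg_monotone : forall u (s t : 'I_n), (s <= t)%N -> opened u s \subset opened u t;
  alg_served : forall u t, conn u t \in opened u t }.

Variables (d : T -> T -> R) (f : T -> R).

Definition alg_cost (A : online_alg) (u : arrivals) : R :=
  \sum_(x in \bigcup_(t : 'I_n) opened A u t) f x
  + \sum_(t : 'I_n) d (u t) (conn A u t).

Definition sol_cost (u sigma : arrivals) : R :=
  \sum_(x in [set sigma t | t : 'I_n]) f x + \sum_(t : 'I_n) d (u t) (sigma t).

(* Offline optimum: minimum over all assignments (the seed value u itself is
   one of the assignments, so this is the true minimum).  Opening extra unused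
   facilities never helps since f >= 0. *)
Definition opt_cost (u : arrivals) : R :=
  \big[Num.min/sol_cost u u]_(sigma : arrivals) sol_cost u sigma.

(* Markov random field: supports Om i, unary potentials psi1, hypergraph E,
   hyperedge potentials psiE e (depending only on the coordinates in e). *)
Variables (Om : 'I_n -> {set T}) (psi1 : 'I_n -> T -> R)
          (E : {set {set 'I_n}}) (psiE : {set 'I_n} -> arrivals -> R).

Definition psi_local : Prop :=
  forall (e : {set 'I_n}) (u v : arrivals), (forall j, j \in e -> u j = v j) -> psiE e u = psiE e v.

Definition in_support (u : arrivals) : bool := [forall i, u i \in Om i].

Definition mrf_weight (u : arrivals) : R :=
  if in_support u then expR (\sum_i psi1 i (u i) + \sum_(e in E) psiE e u) else 0.

Definition mrf_prob (u : arrivals) : R :=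
  mrf_weight u / \sum_(v : arrivals) mrf_weight v.

Definition mrf_expect (g : arrivals -> R) : R :=
  \sum_(u : arrivals) mrf_prob u * g u.

Definition mrf_Delta : R :=
  \big[Num.max/0]_(i : 'I_n)
     \big[Num.max/0]_(u : arrivals | in_support u) `| \sum_(e in E | i \in e) psiE e u |.

End FL.

(* Main.v *)
Require Import Defs.
From HB Require Import structures.
From mathcomp Require Import all_boot all_order all_algebra.
From mathcomp Require Import all_classical all_reals all_analysis.
From mathcomp Require Import zify ring lra.
Import Order.TTheory GRing.Theory Num.Theory.
Local Open Scope ring_scope.
Set Implicit Arguments. Unset Strict Implicit. Unset Printing Implicit Defensive.
Lemma cnt_lt (N K : nat) : (\sum_(t < N) (t < K)%N)%N = minn N K.
Proof.
elim: N => [|N IH]; first by rewrite big_ord0 min0n.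
rewrite big_ord_recr /= IH; case: (ltnP N K) => h; lia.
Qed.

Lemma cnt_int (N a b : nat) : (a <= b)%N ->
  (\sum_(t < N) ((a <= t) && (t < b)))%N = (minn N b - minn N a)%N.
Proof.
move=> ab; elim: N => [|N IH]; first by rewrite big_ord0 !min0n.
rewrite big_ord_recr /= IH; case: (leqP a N) => h1; case: (ltnP N b) => h2 /=; lia.
Qed.

Lemma bernoulli (R : realFieldType) (x : R) (k : nat) : 0 <= x <= 1 ->
  1 - k%:R * x <= (1 - x) ^+ k.
Proof.
case/andP=> x0 x1; elim: k => [|k IH]; first by rewrite expr0 mul0r subr0.
rewrite exprS.
have h0 : 0 <= 1 - x by lra.
have : (1 - x) * (1 - k%:R * x) <= (1 - x) * (1 - x) ^+ k by rewrite ler_wpM2l.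
apply: le_trans.
rewrite -natr1 mulrDl mul1r.
have hk : 0 <= k%:R * x * x by rewrite mulr_ge0 // mulr_ge0.
nra.
Qed.
Section Inst.
Variable R : realType.
Variable p : nat.
Local Notation m := p.+4.
Definition TT := {ffun 'I_m -> 'I_m}.
Definition gam := (m * m)%N.
Definition NN := locked (gam ^ m.+1).-1.
Local Notation n := NN.+1.

Lemma gam_gt1 : (1 < gam)%N.
Proof. rewrite /gam; nia. Qed.

Lemma nE : n = (gam ^ m.+1)%N.
Proof. by rewrite /NN -lock prednK // expn_gt0 ltnW // gam_gt1. Qed.

Definition ph (t : nat) : nat := trunc_log gam t.

Lemma ph_lt t k : (0 < k)%N -> (t < gam ^ k)%N -> (ph t < k)%N.
Proof.
move=> k0 h; case: t h => [|t] h.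
  by rewrite /ph trunc_log0.
have := trunc_logP gam_gt1 (isT : (0 < t.+1)%N).
rewrite -/(ph t.+1) => h2.
by rewrite -(ltn_exp2l _ _ gam_gt1); apply: leq_ltn_trans h2 h.
Qed.

Lemma ph_ge t k : (gam ^ k <= t)%N -> (k <= ph t)%N.
Proof. exact: trunc_log_max gam_gt1. Qed.

Lemma ph_ltn t : (t < gam ^ (ph t).+1)%N.
Proof. exact: trunc_log_ltn gam_gt1. Qed.

Lemma ph_eq t k : (gam ^ k <= t < gam ^ k.+1)%N -> ph t = k.
Proof. exact: trunc_log_eq gam_gt1. Qed.

Lemma ph_mono s t : (s <= t)%N -> (ph s <= ph t)%N.
Proof. exact: leq_trunc_log. Qed.

Lemma ph0 : ph 0 = 0%N.
Proof. by rewrite /ph trunc_log0. Qed.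

Lemma ph_le_m (t : 'I_n) : (ph t <= m)%N.
Proof. have h := ltn_ord t; have : (t < gam ^ m.+1)%N by rewrite -nE. by move/ph_lt; apply. Qed.

Lemma ph_step t : (0 < t)%N -> (ph t <= (ph t.-1).+1)%N.
Proof.
move=> t0; rewrite -ltnS; apply: ph_lt => //.
have h := ph_ltn t.-1.
have : (t <= gam ^ (ph t.-1).+1)%N by rewrite -(prednK t0).
move=> h2; apply: (leq_ltn_trans h2); rewrite ltn_exp2l //; exact: gam_gt1.
Qed.

Definition bnd (t : nat) : bool := (0 < t)%N && (ph t != ph t.-1).

Lemma bnd_ph t : bnd t -> ph t = (ph t.-1).+1.
Proof.
case/andP=> t0 ne; apply/eqP; rewrite eqn_leq ph_step // andTb.
rewrite ltn_neqAle eq_sym ne /=; apply: ph_mono; exact: leq_pred.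
Qed.

Lemma bnd_val t : bnd t -> t = (gam ^ ph t)%N.
Proof.
move=> b; have [t0 _] := andP b; apply/eqP; rewrite eqn_leq.
have h1 : (gam ^ ph t <= t)%N by apply: trunc_logP => //; exact: gam_gt1.
rewrite h1 andbT.
have h := ph_ltn t.-1; rewrite -(bnd_ph b) in h.
by rewrite -(prednK t0) in h *.
Qed.

Definition LL (j : nat) : R := ((gam%:R) ^+ j.+2)^-1.
Definition dd (x y : TT) : R := \sum_(j | x j != y j) LL j.
Definition ff (x : TT) : R := 1.

Lemma gamR_gt1 : 1 < (gam%:R : R).
Proof. by rewrite ltr1n gam_gt1. Qed.

Lemma LL_gt0 j : 0 < LL j.
Proof. by rewrite /LL invr_gt0 exprn_gt0 // (lt_trans ltr01 gamR_gt1). Qed.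

Lemma LL_anti j k : (k <= j)%N -> LL j <= LL k.
Proof.
move=> kj; rewrite /LL lef_pV2 ?posrE ?exprn_gt0 ?(lt_trans ltr01 gamR_gt1) //.
by rewrite ler_eXn2l // ?ltnS // gamR_gt1.
Qed.

Lemma dd_ge0 (x y : TT) : 0 <= dd x y.
Proof. by apply: sumr_ge0 => j _; exact: ltW (LL_gt0 j). Qed.

Lemma dd_ge (x y : TT) (j : 'I_m) : x j != y j -> LL j <= dd x y.
Proof.
move=> h; rewrite /dd (bigD1 j) //= lerDl; apply: sumr_ge0 => i _; exact: ltW (LL_gt0 i).
Qed.

Lemma dd_metric : is_metric dd.
Proof.
split.
- exact: dd_ge0.
- move=> x y; split.
  + move=> h; apply/ffunP => j; apply/eqP; apply/negPn/negP => hj.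
    by have := dd_ge hj; rewrite h => /(lt_le_trans (LL_gt0 j)); rewrite ltxx.
  + by move=> ->; rewrite /dd big_pred0 // => j; rewrite eqxx.
- by move=> x y; apply: eq_bigl => j; rewrite eq_sym.
- move=> x y z; rewrite /dd !(big_mkcond (fun j => _ != _)) -big_split /=.
  apply: ler_sum => j _.
  have l0 := ltW (LL_gt0 j).
  case: (eqVneq (x j) (z j)) => [->|h]; first by rewrite addr_ge0 //; case: ifP.
  case: (eqVneq (x j) (y j)) => [e|h2]; last by rewrite lerDl; case: ifP.
  by rewrite -e h lerDr.
Qed.
Definition prevt (t : 'I_n) : 'I_n := inord t.-1.
Lemma prevtE (t : 'I_n) : (prevt t : nat) = t.-1.
Proof. by rewrite /prevt inordK // (leq_ltn_trans (leq_pred _) (ltn_ord t)). Qed.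

Definition om (u : {ffun 'I_n -> TT}) (t : 'I_n) : TT :=
  u t - (if (t : nat) == 0%N then 0 else u (prevt t)).
Definition eps : R := ((n%:R) ^+ 2)^-1.
Definition ej (j : nat) (a : 'I_m) : TT := [ffun k : 'I_m => if (k : nat) == j then a else 0].
Definition gg (t : 'I_n) (d : TT) : R :=
  if bnd t then (m%:R)^-1 * \sum_(a : 'I_m) ((d == ej (ph t).-1 a)%:R)
  else ((d == 0)%:R).
Definition cT : R := (#|{: TT}|%:R).
Definition qq t d : R := (1 - eps) * gg t d + eps / cT.
Definition pairs (t : 'I_n) : {set 'I_n} := [set prevt t; t].
Definition psiE (e : {set 'I_n}) (u : {ffun 'I_n -> TT}) : R :=
  \sum_(t | e == pairs t) ln (qq t (om u t)).
Definition psi1 (i : 'I_n) (x : TT) : R := 0.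
Definition Om (i : 'I_n) : {set TT} := finset.setTfor TT.
Definition EE : {set {set 'I_n}} := finset.setTfor {set 'I_n}.

Lemma n_ge2 : (2 <= n)%N.
Proof.
rewrite nE; have h := gam_gt1; apply: (leq_trans h).
by rewrite -{1}(expn1 gam) leq_pexp2l // ltnW.
Qed.

Lemma nR_ge2 : 2 <= (n%:R : R).
Proof. by rewrite (ler_nat R 2) n_ge2. Qed.

Lemma eps_gt0 : 0 < eps.
Proof. rewrite /eps invr_gt0 exprn_gt0 //; apply: lt_le_trans nR_ge2; lra. Qed.

Lemma eps_n : (n%:R : R) ^+ 2 * eps = 1.
Proof. rewrite /eps mulfV // expf_neq0 //; apply/eqP => h; have := nR_ge2; rewrite h; lra. Qed.

Lemma eps_le1 : eps <= 1.
Proof.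
have := eps_n; have := nR_ge2; have := eps_gt0 => e0 n2 h.
have : 4 <= (n%:R : R) ^+ 2 by rewrite expr2; nra.
nra.
Qed.

Lemma neps : (n%:R : R) * eps <= 1 / 2.
Proof.
have := eps_n; have := nR_ge2; have := eps_gt0 => e0 n2 h.
rewrite expr2 in h; nra.
Qed.

Lemma cT_ge1 : 1 <= cT.
Proof. by rewrite /cT ler1n; apply/card_gt0P; exists 0. Qed.

Lemma sum_ind (x : TT) : \sum_(d : TT) ((d == x)%:R : R) = 1.
Proof. by rewrite (bigD1 x) //= eqxx big1 ?addr0 // => d /negbTE ->. Qed.

Lemma gg_ge0 t d : 0 <= gg t d.
Proof.
rewrite /gg; case: ifP => _; last by rewrite ler0n.
by rewrite mulr_ge0 // ?invr_ge0 ?ler0n // sumr_ge0 // => a _; rewrite ler0n.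
Qed.

Lemma gg_le1 t d : gg t d <= 1.
Proof.
rewrite /gg; case: ifP => _; last by rewrite lern1 leq_b1.
have mp : (0 : R) < m%:R by rewrite ltr0n.
rewrite ler_pdivrMl // mulr1.
have -> : (m%:R : R) = \sum_(a : 'I_m) 1 by rewrite sumr_const card_ord.
by apply: ler_sum => a _; rewrite lern1 leq_b1.
Qed.

Lemma sum_gg t : \sum_(d : TT) gg t d = 1.
Proof.
rewrite /gg; case: (bnd t); last exact: sum_ind.
rewrite -mulr_sumr exchange_big /=.
under eq_bigr => a _ do rewrite sum_ind.
by rewrite sumr_const card_ord mulVf // pnatr_eq0.
Qed.

Lemma qq_ge t d : eps / cT <= qq t d.
Proof. rewrite /qq lerDr mulr_ge0 // ?gg_ge0 // subr_ge0; exact: eps_le1. Qed.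

Lemma qq_gt0 t d : 0 < qq t d.
Proof.
apply: lt_le_trans (qq_ge t d); rewrite divr_gt0 ?eps_gt0 //.
apply: lt_le_trans cT_ge1; exact: ltr01.
Qed.

Lemma qq_le1 t d : qq t d <= 1.
Proof.
rewrite /qq; have := gg_le1 t d; have := gg_ge0 t d; have := eps_le1; have := eps_gt0.
have := cT_ge1 => c1 e0 e1 g0 g1.
have : eps / cT <= eps by rewrite ler_pdivrMr ?(lt_le_trans ltr01 c1) //; nra.
have : (1 - eps) * gg t d <= 1 - eps by rewrite ler_piMr // subr_ge0.
lra.
Qed.

Lemma sum_qq t : \sum_(d : TT) qq t d = 1.
Proof.
rewrite big_split /= -mulr_sumr sum_gg mulr1 sumr_const.
rewrite -mulr_natr /cT; have : (#|{: TT}|%:R : R) != 0.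
  by rewrite pnatr_eq0 -lt0n; apply/card_gt0P; exists 0.
move=> h; rewrite -mulrA mulVf // mulr1; lra.
Qed.
Local Notation arr := {ffun 'I_n -> TT}.

Lemma insupp (u : arr) : in_support Om u.
Proof. by apply/forallP => i; rewrite /Om inE. Qed.

Lemma esum_gen (P : pred {set 'I_n}) (u : arr) :
  \sum_(e in EE | P e) psiE e u = \sum_(t | P (pairs t)) ln (qq t (om u t)).
Proof.
rewrite /psiE (exchange_big_dep (fun t => P (pairs t))) /=; last first.
  by move=> e t /andP[_ Pe] /eqP <-.
apply: eq_bigr => t Pt; rewrite (big_pred1 (pairs t)) // => e /=.
rewrite /EE inE /=; case: eqP => [->|]; by rewrite ?Pt ?andbF.
Qed.

Lemma weightE (u : arr) :
  mrf_weight Om psi1 EE psiE u = \prod_t qq t (om u t).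
Proof.
rewrite /mrf_weight insupp big1 ?add0r //.
have -> : \sum_(e in EE) psiE e u = \sum_t ln (qq t (om u t)).
  by rewrite -(esum_gen predT) //; apply: eq_bigl => e; rewrite andbT.
rewrite expR_sum; apply: eq_bigr => t _; rewrite lnK // posrE; exact: qq_gt0.
Qed.

Lemma om_inj : injective (fun u : arr => [ffun t => om u t]).
Proof.
move=> u v /ffunP huv; apply/ffunP.
suff H : forall k (t : 'I_n), (t <= k)%N -> u t = v t by move=> t; exact: H (leqnn t).
elim=> [|k IH] t.
  rewrite leqn0 => /eqP t0.
  have := huv t; rewrite !ffunE /om t0 /= !subr0; done.
rewrite leq_eqVlt => /orP[/eqP tk|]; last by rewrite ltnS; exact: IH.
have := huv t; rewrite !ffunE /om tk /=.
rewrite (IH (prevt t)); first by move/(congr1 (fun x => x + v (prevt t))); rewrite !subrK.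
by rewrite prevtE tk.
Qed.

Lemma Zsum : \sum_(u : arr) \prod_t qq t (om u t) = 1.
Proof.
have H : \sum_(w : arr) \prod_t qq t (w t) = 1.
  by rewrite -(bigA_distr_bigA (fun t d => qq t d)) /= big1 // => t _; exact: sum_qq.
rewrite (reindex_inj om_inj) /= in H; rewrite -[RHS]H; apply: eq_bigr => u _.
by apply: eq_bigr => t _; rewrite ffunE.
Qed.

Lemma probE (u : arr) : mrf_prob Om psi1 EE psiE u = \prod_t qq t (om u t).
Proof.
rewrite /mrf_prob weightE.
have -> : \sum_(v : arr) mrf_weight Om psi1 EE psiE v = 1.
  by rewrite -Zsum; apply: eq_bigr => v _; exact: weightE.
by rewrite divr1.
Qed.

Lemma expectE (g : arr -> R) :
  mrf_expect Om psi1 EE psiE g = \sum_u (\prod_t qq t (om u t)) * g u.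
Proof. by apply: eq_bigr => u _; rewrite probE. Qed.

Lemma psi_loc : psi_local psiE.
Proof.
move=> e u v huv; rewrite /psiE; apply: eq_bigr => t /eqP et.
by rewrite /om !huv // et /pairs !inE eqxx ?orbT.
Qed.
Definition Lam : R := ln (cT / eps).

Lemma cT_pos : 0 < cT.
Proof. exact: lt_le_trans ltr01 cT_ge1. Qed.

Lemma ln_qq_le0 t d : ln (qq t d) <= 0.
Proof. exact: ln_le0 (qq_le1 t d). Qed.

Lemma ln_qq_ge t d : - Lam <= ln (qq t d).
Proof.
have h1 : 0 < eps / cT by rewrite divr_gt0 ?eps_gt0 ?cT_pos.
rewrite /Lam -lnV ?posrE ?divr_gt0 ?eps_gt0 ?cT_pos // invf_div.
by rewrite ler_ln ?posrE ?qq_gt0 // qq_ge.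
Qed.

Lemma Lam_ge0 : 0 <= Lam.
Proof. have := ln_qq_ge ord0 0; have := ln_qq_le0 ord0 0; lra. Qed.

Lemma norm_ln_qq t d : `|ln (qq t d)| <= Lam.
Proof. rewrite ler_norml; have := ln_qq_ge t d; have := ln_qq_le0 t d; have := Lam_ge0; lra. Qed.

Lemma pair_ind (i t : 'I_n) : i \in pairs t -> (t == i) || (t == inord i.+1).
Proof.
rewrite /pairs !inE => /orP[/eqP e|/eqP ->]; last by rewrite eqxx.
case: (posnP t) => [t0|tp].
  by apply/orP; left; apply/eqP/val_inj; rewrite /= t0 e prevtE t0.
apply/orP; right; apply/eqP/val_inj.
by rewrite /= e prevtE prednK // inord_val.
Qed.

Lemma sum_ind_gen (I : finType) (x : I) : \sum_(d : I) ((d == x)%:R : R) = 1.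
Proof. by rewrite (bigD1 x) //= eqxx big1 ?addr0 // => d /negbTE ->. Qed.

Lemma sum_pairs (c : R) (i : 'I_n) : 0 <= c -> \sum_(t | i \in pairs t) c <= c *+ 2.
Proof.
move=> c0; rewrite big_mkcond /=.
have h : forall t : 'I_n, (if i \in pairs t then c else 0)
   <= c * (t == i)%:R + c * (t == inord i.+1)%:R.
  move=> t; case: ifP => h; last by rewrite addr_ge0 // mulr_ge0 // ler0n.
  case/orP: (pair_ind h) => /eqP ->; rewrite eqxx mulr1.
    by rewrite lerDl mulr_ge0 // ler0n.
  by rewrite lerDr mulr_ge0 // ler0n.
apply: le_trans (ler_sum _ (fun t _ => h t)) _.
by rewrite big_split /= -!mulr_sumr !sum_ind_gen mulr1 mulr2n.
Qed.

Lemma vsum_le (i : 'I_n) u : `|\sum_(e in EE | i \in e) psiE e u| <= Lam *+ 2.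
Proof.
rewrite esum_gen.
apply: le_trans (ler_norm_sum _ _ _) _.
have h : \sum_(t | i \in pairs t) `|ln (qq t (om u t))| <= \sum_(t | i \in pairs t) Lam.
  by apply: ler_sum => t _; exact: norm_ln_qq.
apply: le_trans h _.
exact: sum_pairs Lam_ge0.
Qed.

Definition delta0 : TT := [ffun _ => ord_max].

Lemma delta0_neq0 : (delta0 == 0) = false.
Proof. apply/negbTE/negP => /eqP /ffunP /(_ ord0); rewrite !ffunE => /(congr1 val) //. Qed.

Lemma vsum_ge : Lam <= `|\sum_(e in EE | ord0 \in e) psiE e [ffun _ => delta0]|.
Proof.
rewrite esum_gen (bigD1 ord0) /=; last by rewrite /pairs !inE eqxx orbT.
have h1 : qq ord0 (om [ffun _ => delta0] ord0) = eps / cT.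
  rewrite /qq /om /gg /= !ffunE subr0 /bnd /= delta0_neq0 mulr0 add0r //.
have h2 : \sum_(t | (ord0 \in pairs t) && (t != ord0)) ln (qq t (om [ffun=> delta0] t)) <= 0.
  by apply: sumr_le0 => t _; exact: ln_qq_le0.
rewrite h1 ler_normr; apply/orP; right.
have h3 : ln (eps / cT) = - Lam.
  by rewrite /Lam -lnV ?posrE ?divr_gt0 ?eps_gt0 ?cT_pos // invf_div.
rewrite h3; lra.
Qed.

Lemma Delta_le : mrf_Delta Om EE psiE <= Lam *+ 2.
Proof.
apply: bigmax_le; first by rewrite mulrn_wge0 // Lam_ge0.
move=> i _; apply: bigmax_le; first by rewrite mulrn_wge0 // Lam_ge0.
move=> u _; exact: vsum_le.
Qed.

Lemma Delta_ge : Lam <= mrf_Delta Om EE psiE.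
Proof.
apply: (bigmax_sup ord0) => //.
apply: (bigmax_sup [ffun _ => delta0]); first exact: insupp.
exact: vsum_ge.
Qed.
Definition zz (k : nat) (c : TT) : TT := [ffun j : 'I_m => if (j < k)%N then c j else 0].
Definition useq (c : TT) : arr := [ffun t : 'I_n => zz (ph t) c].

Lemma dd_xx x : dd x x = 0.
Proof. by rewrite /dd big_pred0 // => j; rewrite eqxx. Qed.

Lemma sol_cost_ge1 (u sigma : arr) : 1 <= sol_cost dd ff u sigma.
Proof.
rewrite /sol_cost /ff sumr_const.
have h : (0 < #|[set sigma t | t : 'I_n]|)%N.
  by rewrite card_gt0; apply/set0Pn; exists (sigma ord0); apply: imset_f.
have h2 : 0 <= \sum_t dd (u t) (sigma t) by apply: sumr_ge0 => t _; exact: dd_ge0.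
have h3 : (1 : R) <= 1 *+ #|[set sigma t | t : 'I_n]| by rewrite ler1n.
lra.
Qed.

Lemma opt_ge1 (u : arr) : 1 <= opt_cost dd ff u.
Proof. by apply: le_bigmin => [|s _]; exact: sol_cost_ge1. Qed.

Lemma opt_le_n (u : arr) : opt_cost dd ff u <= n%:R.
Proof.
apply: le_trans (bigmin_le_id _ _ _ _) _.
rewrite /sol_cost /ff sumr_const big1 ?addr0; last by move=> t _; exact: dd_xx.
rewrite ler_nat; apply: leq_trans (leq_imset_card _ _) _; by rewrite card_ord.
Qed.

Lemma dd_zz k c : dd (zz k c) c <= m%:R * LL k.
Proof.
have h1 : dd (zz k c) c <= \sum_(j : 'I_m) LL k.
  rewrite /dd big_mkcond /=; apply: ler_sum => j _.
  case: ifP => h; last exact: ltW (LL_gt0 k).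
  apply: LL_anti; move: h; rewrite /zz ffunE; case: ltnP => //.
  by rewrite eqxx.
by apply: le_trans h1 _; rewrite sumr_const card_ord mulr_natl lexx.
Qed.

Lemma LL_ph (t : 'I_n) :
  LL (ph t) <= \sum_(k < m.+1) ((t < gam ^ k.+1)%N%:R * LL k).
Proof.
have hk : (ph t < m.+1)%N by rewrite ltnS ph_le_m.
rewrite (bigD1 (Ordinal hk)) //= ph_ltn mul1r lerDl.
by apply: sumr_ge0 => k _; rewrite mulr_ge0 ?ler0n // ltW // LL_gt0.
Qed.

Lemma cnt_ltR K : \sum_(t : 'I_n) ((t < K)%N%:R : R) <= K%:R.
Proof.
rewrite -natr_sum ler_nat.
have -> : (\sum_(t : 'I_n) (t < K)%N)%N = minn n K by exact: cnt_lt.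
exact: geq_minr.
Qed.

Lemma LL_gam k : LL k * (gam ^ k.+1)%N%:R = (gam%:R)^-1.
Proof.
have g0 : (gam%:R : R) != 0 by rewrite pnatr_eq0 -lt0n ltnW // gam_gt1.
rewrite /LL natrX (exprS _ k.+1) invfM -mulrA mulVf ?mulr1 //.
by rewrite expf_neq0.
Qed.

Lemma dsum_good c : \sum_t dd (useq c t) c <= 2.
Proof.
have h1 : \sum_t dd (useq c t) c <= \sum_(t : 'I_n) (m%:R * LL (ph t)).
  by apply: ler_sum => t _; rewrite ffunE; exact: dd_zz.
apply: le_trans h1 _.
rewrite -mulr_sumr.
have h2 : \sum_(t : 'I_n) LL (ph t) <= \sum_(k < m.+1) (gam%:R : R)^-1.
  have h3 : \sum_(t : 'I_n) LL (ph t) <=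
      \sum_(t : 'I_n) \sum_(k < m.+1) ((t < gam ^ k.+1)%N%:R * LL k).
    by apply: ler_sum => t _; exact: LL_ph.
  apply: le_trans h3 _; rewrite exchange_big /=; apply: ler_sum => k _.
  rewrite -mulr_suml -(LL_gam k) [X in _ <= X]mulrC ler_wpM2r ?cnt_ltR //.
  exact: ltW (LL_gt0 k).
have h4 : 0 <= (m%:R : R) by rewrite ler0n.
apply: le_trans (ler_wpM2l h4 h2) _.
rewrite sumr_const card_ord /gam natrM invfM -[(_ / _) *+ _]mulr_natr.
have e1 : ((m.+1)%:R : R) = m%:R + 1 by rewrite natr1.
rewrite e1.
have m0 : (m%:R : R) != 0 by rewrite pnatr_eq0.
have m4 : 4 <= (m%:R : R) by rewrite (ler_nat R 4).
have xy : (m%:R : R) * (m%:R)^-1 = 1 by rewrite mulfV.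
have y0 : 0 <= ((m%:R : R))^-1 by rewrite invr_ge0 ler0n.
set x := (m%:R : R) in m0 m4 xy y0 *; set y := x^-1 in xy y0 *.
have e : x * (y * y * (x + 1)) = (x * y) * (x * y) + (x * y) * y by ring.
rewrite e xy.
have : 4 * y <= x * y by rewrite ler_wpM2r.
nra.
Qed.

Lemma opt_good c : opt_cost dd ff (useq c) <= 3.
Proof.
rewrite /opt_cost; apply: le_trans (bigmin_le _ [ffun _ => c] _) _.
rewrite /sol_cost /ff sumr_const.
have h1 : (#|[set [ffun _ => c] t | t : 'I_n]| <= 1)%N.
  rewrite -(cards1 c); apply: subset_leq_card; apply/fintype.subsetP => x.
  by case/imsetP => t _ ->; rewrite ffunE inE.
have h2 : (1 : R) *+ #|[set [ffun _ => c] t | t : 'I_n]| <= 1 by rewrite lern1.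
have h3 : \sum_t dd (useq c t) ([ffun _ => c] t) <= 2.
  by under eq_bigr => t _ do rewrite ffunE; exact: dsum_good.
lra.
Qed.
Definition tk (k : nat) : 'I_n := inord (gam ^ k.+1).-1.

Lemma gam_exp_le k : (k <= m)%N -> (gam ^ k.+1 <= n)%N.
Proof. by move=> km; rewrite nE leq_pexp2l // ltnW // gam_gt1. Qed.

Lemma gam_exp_gt0 k : (0 < gam ^ k)%N.
Proof. by rewrite expn_gt0 ltnW // gam_gt1. Qed.

Lemma tkE k : (k <= m)%N -> (tk k : nat) = (gam ^ k.+1).-1.
Proof.
move=> km; rewrite /tk inordK //.
by rewrite prednK ?gam_exp_gt0 // gam_exp_le.
Qed.

Lemma tk_mono j k : (j <= k)%N -> (k <= m)%N -> (tk j <= tk k)%N.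
Proof.
move=> jk km; rewrite !tkE // ?(leq_trans jk) //.
rewrite -ltnS !prednK ?gam_exp_gt0 // leq_pexp2l // ltnW // gam_gt1.
Qed.

Lemma ej_j (j : 'I_m) a : ej j a j = a.
Proof. by rewrite ffunE eqxx. Qed.

Lemma zz_shift k (j : 'I_m) a (c : TT) : (k <= j)%N -> zz k (ej j a + c) = zz k c.
Proof.
move=> kj; apply/ffunP => i; rewrite !ffunE; case: ifP => // ik.
case: eqP => [e|_]; last by rewrite add0r.
by move: ik; rewrite e ltnNge kj.
Qed.

Section Alg.
Variable A : online_alg TT n.

Definition VV k (c : TT) := opened A (useq c) (tk k).
Definition newj (j : nat) (c : TT) : bool := ~~ (VV j.+1 c \subset VV j c).
Definition pre (j : 'I_m) (c : TT) : bool := [exists y in VV j c, y j == c j].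
Definition DD (j : 'I_m) (c : TT) : R :=
  \sum_(t : 'I_n | ph t == j.+1) dd (useq c t) (conn A (useq c) t).

Lemma VV_mono j k (c : TT) : (j <= k)%N -> (k <= m)%N -> VV j c \subset VV k c.
Proof. by move=> jk km; apply: alg_monotone; exact: tk_mono. Qed.

Lemma VV_card k (c : TT) : (k <= m)%N -> (\sum_(j < k) newj j c <= #|VV k c|)%N.
Proof.
elim: k => [|k IH] km; first by rewrite big_ord0.
rewrite big_ord_recr /=; have km' : (k <= m)%N by exact: ltnW.
have := IH km'; have sub : VV k c \subset VV k.+1 c by exact: VV_mono.
case nj : (newj k c); last by rewrite addn0 => h; apply: leq_trans h (subset_leq_card sub).
move=> h; rewrite addn1; apply: leq_ltn_trans h _; apply: proper_card.
by rewrite properE sub; move: nj; rewrite /newj.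
Qed.

Lemma VV_bigcup k (c : TT) : VV k c \subset \bigcup_(t : 'I_n) opened A (useq c) t.
Proof. exact: (finset.bigcup_sup (tk k)). Qed.

Lemma alg_costE (c : TT) : alg_cost dd ff A (useq c) =
  #|\bigcup_(t : 'I_n) opened A (useq c) t|%:R + \sum_t dd (useq c t) (conn A (useq c) t).
Proof. by rewrite /alg_cost /ff sumr_const. Qed.

Lemma DD_ge0 j c : 0 <= DD j c.
Proof. by apply: sumr_ge0 => t _; exact: dd_ge0. Qed.

Lemma sum_one_j (t : 'I_n) (x : R) : 0 <= x -> \sum_(j : 'I_m | ph t == j.+1) x <= x.
Proof.
move=> x0; case: (posnP (ph t)) => [p0|pp].
  by rewrite big_pred0 // => j; rewrite p0.
have hj : ((ph t).-1 < m)%N by rewrite prednK // ph_le_m.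
rewrite (big_pred1 (Ordinal hj)) // => j /=; apply/eqP/eqP => [e|e].
  by apply: val_inj => /=; rewrite e.
by rewrite e /= prednK.
Qed.

Lemma dsum_DD (c : TT) : \sum_(j : 'I_m) DD j c <= \sum_t dd (useq c t) (conn A (useq c) t).
Proof.
rewrite /DD; under eq_bigr => j _ do rewrite big_mkcond /=.
rewrite exchange_big /=; eapply ler_sum => t _.
rewrite -big_mkcond /=; eapply sum_one_j; exact: dd_ge0.
Qed.

Lemma DD_ge (j : 'I_m) (c : TT) : ~~ pre j c -> ~~ newj j c -> 1 / 2 <= DD j c.
Proof.
move=> npre nnew.
have jm : (j.+1 <= m)%N by exact: ltn_ord.
have key : forall t : 'I_n, (gam ^ j.+1 <= t < gam ^ j.+2)%N ->
    (ph t == j.+1) && (LL j <= dd (useq c t) (conn A (useq c) t)).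
  move=> t ht; have pt := ph_eq ht; rewrite pt eqxx /=.
  apply: dd_ge; rewrite ffunE pt /zz ffunE ltnSn.
  have hc : conn A (useq c) t \in VV j c.
    have s1 : opened A (useq c) t \subset VV j.+1 c.
      apply: alg_monotone; rewrite tkE // -ltnS prednK ?gam_exp_gt0 //.
      by case/andP: ht.
    have := alg_served A (useq c) t => hs.
    have s2 : VV j.+1 c \subset VV j c by move: nnew; rewrite /newj negbK.
    by apply: (fintype.subsetP s2); apply: (fintype.subsetP s1).
  apply/negP => /eqP e; move: npre; rewrite /pre; apply/negP/negPn.
  by apply/existsP; exists (conn A (useq c) t); rewrite hc -e eqxx.
have h1 : \sum_(t : 'I_n) ((gam ^ j.+1 <= t < gam ^ j.+2)%N%:R * LL j) <= DD j c.
  rewrite /DD [X in _ <= X]big_mkcond /=; eapply ler_sum => t _.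
  case ht : (gam ^ j.+1 <= t < gam ^ j.+2)%N.
    by case/andP: (key t ht) => -> h; rewrite mul1r.
  rewrite mul0r; case: ifP => _ //; exact: dd_ge0.
apply: le_trans h1; rewrite -mulr_suml -natr_sum.
have le1 : (gam ^ j.+1 <= gam ^ j.+2)%N by rewrite leq_pexp2l // ltnW // gam_gt1.
rewrite cnt_int //.
have e1 : minn n (gam ^ j.+2) = (gam ^ j.+2)%N by apply/minn_idPr; exact: gam_exp_le.
have e2 : minn n (gam ^ j.+1) = (gam ^ j.+1)%N.
  by apply/minn_idPr; apply: gam_exp_le; exact: ltnW.
rewrite e1 e2 natrB //.
rewrite mulrBl [X in X - _]mulrC [X in _ - X]mulrC LL_gam.
have -> : LL j * (gam ^ j.+2)%N%:R = 1.
  rewrite /LL natrX mulVf // expf_neq0 // pnatr_eq0 -lt0n ltnW // gam_gt1.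
have g2 : (2 : R) <= gam%:R by rewrite (ler_nat R 2) gam_gt1.
have gy : (gam%:R : R) * (gam%:R)^-1 = 1.
  by rewrite mulfV // pnatr_eq0 -lt0n ltnW // gam_gt1.
have y0 : 0 <= (gam%:R : R)^-1 by rewrite invr_ge0 ler0n.
set y := (gam%:R : R)^-1 in gy y0 *.
have : 2 * y <= gam%:R * y by rewrite ler_wpM2r.
lra.
Qed.
Lemma alg_ge_card (j : nat) (c : TT) : (#|VV j c|%:R : R) <= alg_cost dd ff A (useq c).
Proof.
rewrite alg_costE.
have h : (#|VV j c| <= #|\bigcup_(t : 'I_n) opened A (useq c) t|)%N.
  exact: subset_leq_card (VV_bigcup j c).
have h2 : 0 <= \sum_t dd (useq c t) (conn A (useq c) t) by apply: sumr_ge0 => t _; exact: dd_ge0.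
have : (#|VV j c|%:R : R) <= #|\bigcup_(t : 'I_n) opened A (useq c) t|%:R by rewrite ler_nat.
lra.
Qed.

Lemma alg_ge (c : TT) :
  (m%:R - \sum_(j : 'I_m) (pre j c)%:R) / 2 <= alg_cost dd ff A (useq c).
Proof.
rewrite alg_costE.
have h1 : ((\sum_(j < m) newj j c)%N%:R : R) <= #|\bigcup_(t : 'I_n) opened A (useq c) t|%:R.
  rewrite ler_nat; apply: leq_trans (VV_card c (leqnn m)) _.
  exact: subset_leq_card (VV_bigcup m c).
have h2 := dsum_DD c.
have h3 : forall j : 'I_m, (1 - (pre j c)%:R) / 2 <= (newj j c)%:R + DD j c.
  move=> j; have d0 := DD_ge0 j c.
  case pj : (pre j c).
    by rewrite subrr mul0r addr_ge0 // ler0n.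
  case nj : (newj j c).
    rewrite /= ?mulr1n ?mulr0n ?subr0; lra.
  have := DD_ge (negbT pj) (negbT nj); rewrite /= ?mulr1n ?mulr0n ?subr0 ?add0r; lra.
have h4 : \sum_(j : 'I_m) ((1 - (pre j c)%:R) / 2) <= \sum_(j : 'I_m) ((newj j c)%:R + DD j c).
  by apply: ler_sum => j _; exact: h3 j.
rewrite big_split /= -natr_sum in h4.
have e1 : (m%:R - \sum_(j : 'I_m) (pre j c)%:R : R) = \sum_(j : 'I_m) (1 - (pre j c)%:R : R).
  by rewrite sumrB sumr_const card_ord.
have e2 : (\sum_(j : 'I_m) (1 - (pre j c)%:R : R)) / 2 = \sum_(j : 'I_m) ((1 - (pre j c)%:R) / 2).
  by rewrite big_distrl.
have e : (m%:R - \sum_(j : 'I_m) (pre j c)%:R) / 2 = \sum_(j : 'I_m) ((1 - (pre j c)%:R) / 2 : R).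
  by rewrite e1 e2.
rewrite e; lra.
Qed.

Lemma VV_shift (j : 'I_m) a (c : TT) : VV j (ej j a + c) = VV j c.
Proof.
rewrite /VV.
suff H : forall s : 'I_n, (s <= tk j)%N -> useq (ej j a + c) s = useq c s.
  by case: (@alg_causal _ _ A (useq (ej j a + c)) (useq c) (tk j) H).
move=> s hs; rewrite !ffunE zz_shift //.
have : (s < gam ^ j.+1)%N.
  move: hs; rewrite tkE; last exact: ltnW (ltn_ord j).
  by rewrite -ltnS prednK ?gam_exp_gt0.
by move/(ph_lt (isT : (0 < j.+1)%N)).
Qed.

Lemma pre_avg (j : 'I_m) :
  m%:R * \sum_(c : TT) ((pre j c)%:R : R) <= \sum_(c : TT) (#|VV j c|%:R : R).
Proof.
pose G (c : TT) : R := \sum_(y in VV j c) ((y j == c j)%:R : R).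
have s1 : \sum_(c : TT) ((pre j c)%:R : R) <= \sum_(c : TT) G c.
  apply: ler_sum => c _; rewrite /G.
  case pj : (pre j c); last by apply: sumr_ge0 => y _; rewrite ler0n.
  case/existsP: pj => y0 /andP[y0in /eqP y0e].
  rewrite (bigD1 y0) //= y0e eqxx lerDl.
  by apply: sumr_ge0 => y _; rewrite ler0n.
have s2 : forall a : 'I_m, \sum_(c : TT) G c = \sum_(c : TT) G (ej j a + c).
  by move=> a; rewrite (reindex_inj (addrI (ej j a))).
have s3 : forall c : TT, \sum_(a : 'I_m) G (ej j a + c) = #|VV j c|%:R.
  move=> c; rewrite /G.
  under eq_bigr => a _ do rewrite VV_shift ffunE ej_j.
  rewrite exchange_big /=.
  have -> : \sum_(y in VV j c) \sum_(a : 'I_m) ((y j == a + c j)%:R : R)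
          = \sum_(y in VV j c) 1.
    apply: eq_bigr => y _.
    under eq_bigr => a _ do rewrite -subr_eq eq_sym.
    exact: sum_ind_gen.
  by rewrite sumr_const.
have e1 : m%:R * \sum_(c : TT) G c = \sum_(a : 'I_m) \sum_(c : TT) G (ej j a + c).
  rewrite -(eq_bigr _ (fun a _ => s2 a)) sumr_const card_ord mulr_natl //.
have h0 : (0 : R) <= m%:R by rewrite ler0n.
apply: le_trans (ler_wpM2l h0 s1) _; rewrite e1 exchange_big /=.
by apply: ler_sum => c _; rewrite s3.
Qed.

Lemma alg_sum : m%:R * cT / 3 <= \sum_(c : TT) alg_cost dd ff A (useq c).
Proof.
set S := \sum_(c : TT) alg_cost dd ff A (useq c).
have h1 : \sum_(c : TT) ((m%:R - \sum_(j : 'I_m) (pre j c)%:R) / 2) <= S.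
  by apply: ler_sum => c _; exact: alg_ge.
set P := \sum_(j : 'I_m) \sum_(c : TT) ((pre j c)%:R : R).
have e : \sum_(c : TT) ((m%:R - \sum_(j : 'I_m) (pre j c)%:R) / 2) = (m%:R * cT - P) / 2.
  rewrite -mulr_suml sumrB sumr_const /P exchange_big /= /cT mulr_natr //.
rewrite e in h1.
have h2 : forall j : 'I_m, m%:R * \sum_(c : TT) ((pre j c)%:R : R) <= S.
  move=> j; apply: le_trans (pre_avg j) _.
  by apply: ler_sum => c _; exact: alg_ge_card.
have h3 : m%:R * P <= m%:R * S.
  rewrite /P mulr_sumr.
  have : \sum_(j : 'I_m) (m%:R * \sum_(c : TT) ((pre j c)%:R : R)) <= \sum_(j : 'I_m) S.
    by apply: ler_sum => j _; exact: h2.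
  by rewrite sumr_const card_ord mulr_natl.
have mp : (0 : R) < m%:R by rewrite ltr0n.
have h4 : P <= S by rewrite -(ler_pM2l mp).
lra.
Qed.
End Alg.

Lemma zz0 (c : TT) : zz 0 c = 0.
Proof. by apply/ffunP => j; rewrite !ffunE. Qed.

Lemma zz_m (c : TT) : zz m c = c.
Proof. by apply/ffunP => j; rewrite !ffunE ltn_ord. Qed.

Lemma zz_step k (c : TT) : (k < m)%N -> zz k.+1 c - zz k c = ej k (c (inord k)).
Proof.
move=> km; apply/ffunP => j; rewrite !ffunE.
case: (ltngtP j k) => h.
- by rewrite ltnS ltnW // subrr.
- rewrite (_ : (j < k.+1)%N = false) ?subr0 //; apply/negbTE; rewrite -leqNgt; exact: h.
- rewrite h ltnSn subr0; congr (c _); apply: val_inj; by rewrite /= inordK // -h.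
Qed.

Definition hh (t : 'I_n) : R := if bnd t then (m%:R)^-1 else 1.

Lemma gg_good (c : TT) (t : 'I_n) : hh t <= gg t (om (useq c) t).
Proof.
rewrite /hh /gg /om !ffunE.
case: (posnP t) => [t0|tp].
  by rewrite /bnd t0 /= subr0 ph0 zz0 eqxx mulr1n lexx.
rewrite prevtE.
case b : (bnd t).
  have e := bnd_ph b.
  have km : (ph t.-1 < m)%N by rewrite -ltnS -e ltnS ph_le_m.
  rewrite e zz_step //= (bigD1 (c (inord (ph t.-1)))) //= eqxx mulr1n.
  rewrite -[X in X <= _]mulr1 ler_wpM2l ?invr_ge0 ?ler0n // lerDl.
  by apply: sumr_ge0 => a _; rewrite ler0n.
have e : ph t = ph t.-1 by move: b; rewrite /bnd tp /= => /negbFE /eqP.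
by rewrite e subrr eqxx.
Qed.

Definition W0 : R := (1 - eps) ^+ n * ((m%:R)^-1) ^+ m.

Lemma bnd_card : (#|(fun t : 'I_n => bnd t)| <= m)%N.
Proof.
pose f (t : 'I_n) : 'I_m := inord (ph t).-1.
have inj : {in (fun t : 'I_n => bnd t) &, injective f}.
  move=> t1 t2 b1 b2 e.
  have p1 : (0 < ph t1 <= m)%N by rewrite (bnd_ph b1) /= -(bnd_ph b1) ph_le_m.
  have p2 : (0 < ph t2 <= m)%N by rewrite (bnd_ph b2) /= -(bnd_ph b2) ph_le_m.
  have : ((ph t1).-1 = (ph t2).-1)%N.
    move: e => /(congr1 val) /=; rewrite !inordK //.
      by case/andP: p2 => a b; rewrite prednK.
    by case/andP: p1 => a b; rewrite prednK.
  move=> e2; apply: val_inj => /=.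
  rewrite (bnd_val b1) (bnd_val b2); congr (gam ^ _)%N.
  case/andP: p1 => a _; case/andP: p2 => b _.
  by rewrite -(prednK a) -(prednK b) e2.
rewrite -(card_in_imset inj); apply: leq_trans (max_card _) _; by rewrite card_ord.
Qed.

Lemma good_weight (c : TT) : W0 <= \prod_t qq t (om (useq c) t).
Proof.
have y0 : (0 : R) <= (m%:R)^-1 by rewrite invr_ge0 ler0n.
have y1 : (m%:R : R)^-1 <= 1 by rewrite invf_le1 ?ler1n ?ltr0n.
have e0 := eps_le1; have e1 := eps_gt0.
have h1 : \prod_t ((1 - eps) * hh t) <= \prod_t qq t (om (useq c) t).
  apply: ler_prod => t _; apply/andP; split.
    by rewrite mulr_ge0 ?subr_ge0 // /hh; case: ifP.
  rewrite /qq; apply: le_trans (_ : (1 - eps) * gg t (om (useq c) t) <= _).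
    by rewrite ler_wpM2l ?subr_ge0 ?gg_good.
  by rewrite lerDl divr_ge0 ?ltW // (lt_le_trans ltr01 cT_ge1).
apply: le_trans h1; rewrite big_split /= prodr_const card_ord /W0.
rewrite ler_wpM2l ?exprn_ge0 ?subr_ge0 //.
rewrite /hh -big_mkcond /= prodr_const.
by apply: ler_wiXn2l => //; exact: bnd_card.
Qed.

Lemma W0cT : W0 * cT = (1 - eps) ^+ n.
Proof.
rewrite /W0 /cT card_ffun !card_ord natrX -mulrA -exprMn mulVf ?pnatr_eq0 //.
by rewrite expr1n mulr1.
Qed.

Lemma W0_ge0 : 0 <= W0.
Proof.
by rewrite /W0 mulr_ge0 ?exprn_ge0 ?invr_ge0 ?ler0n ?subr_ge0 ?eps_le1.
Qed.

Lemma half_le : 1 / 2 <= (1 - eps) ^+ n.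
Proof.
apply: le_trans (bernoulli _ _) ; last by rewrite eps_le1 ltW ?eps_gt0.
have := neps; lra.
Qed.

Lemma useq_inj : injective useq.
Proof.
move=> c1 c2 /ffunP /(_ (tk m)); rewrite !ffunE.
have -> : ph (tk m) = m.
  apply: ph_eq; rewrite tkE //; apply/andP; split.
    by rewrite -ltnS prednK ?gam_exp_gt0 // ltn_exp2l // gam_gt1.
  by rewrite ltn_predL gam_exp_gt0.
by rewrite !zz_m.
Qed.

Definition GS : {set arr} := [set useq c | c : TT].

Lemma sum_GS (F : arr -> R) : \sum_(u in GS) F u = \sum_(c : TT) F (useq c).
Proof. by rewrite big_imset //; move=> x y _ _; exact: useq_inj. Qed.

Lemma sum_split (F : arr -> R) : \sum_u F u = \sum_(u in GS) F u + \sum_(u in ~: GS) F u.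
Proof.
rewrite (bigID (fun u => u \in GS)) /=; congr (_ + _); apply: eq_bigl => u //.
by rewrite inE.
Qed.

Lemma alg_cost_ge0 (A : online_alg TT n) (u : arr) : 0 <= alg_cost dd ff A u.
Proof.
apply: addr_ge0; first by apply: sumr_ge0 => x _; rewrite /ff ler01.
by apply: sumr_ge0 => t _; exact: dd_ge0.
Qed.

Lemma E_alg (A : online_alg TT n) :
  m%:R / 6 <= mrf_expect Om psi1 EE psiE (alg_cost dd ff A).
Proof.
rewrite expectE sum_split.
have h0 : 0 <= \sum_(u in ~: GS) (\prod_t qq t (om u t)) * alg_cost dd ff A u.
  apply: sumr_ge0 => u _; apply: mulr_ge0.
    by apply: prodr_ge0 => t _; exact: ltW (qq_gt0 _ _).
  exact: alg_cost_ge0.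
apply: le_trans (_ : \sum_(u in GS) (\prod_t qq t (om u t)) * alg_cost dd ff A u <= _); last first.
  by rewrite lerDl.
rewrite sum_GS.
have h1 : \sum_(c : TT) W0 * alg_cost dd ff A (useq c)
   <= \sum_(c : TT) (\prod_t qq t (om (useq c) t)) * alg_cost dd ff A (useq c).
  apply: ler_sum => c _; apply: ler_wpM2r; last exact: good_weight.
  exact: alg_cost_ge0.
apply: le_trans h1; rewrite -mulr_sumr.
have h2 := alg_sum A.
have h3 : W0 * (m%:R * cT / 3) <= W0 * \sum_(c : TT) alg_cost dd ff A (useq c).
  by rewrite ler_wpM2l ?W0_ge0.
apply: le_trans h3.
have e : W0 * (m%:R * cT / 3) = (W0 * cT) * m%:R / 3 by field.
rewrite e W0cT.
have := half_le; have : (0 : R) <= m%:R by rewrite ler0n.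
move=> hm hh2.
have : (1/2) * m%:R <= (1 - eps) ^+ n * m%:R by rewrite ler_wpM2r.
lra.
Qed.
Definition ww (u : arr) : R := \prod_t qq t (om u t).

Lemma ww_ge0 u : 0 <= ww u.
Proof. by apply: prodr_ge0 => t _; exact: ltW (qq_gt0 _ _). Qed.

Lemma wGS_ge : (1 - eps) ^+ n <= \sum_(u in GS) ww u.
Proof.
rewrite sum_GS -W0cT.
have h : \sum_(c : TT) W0 <= \sum_(c : TT) ww (useq c).
  by apply: ler_sum => c _; exact: good_weight.
apply: le_trans h; by rewrite sumr_const /cT mulr_natr.
Qed.

Lemma E_opt : mrf_expect Om psi1 EE psiE (opt_cost dd ff) <= 4.
Proof.
rewrite expectE sum_split.
have h1 : \sum_(u in GS) ww u * opt_cost dd ff u <= \sum_(u in GS) ww u * 3.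
  apply: ler_sum => u /imsetP [c _ ->]; rewrite ler_wpM2l ?ww_ge0 //.
  exact: opt_good.
have h2 : \sum_(u in ~: GS) ww u * opt_cost dd ff u <= \sum_(u in ~: GS) ww u * n%:R.
  by apply: ler_sum => u _; rewrite ler_wpM2l ?ww_ge0 ?opt_le_n.
rewrite -!mulr_suml in h1 h2.
have hs : \sum_(u in GS) ww u + \sum_(u in ~: GS) ww u = 1 by rewrite -sum_split Zsum.
have ha := wGS_ge.
have hb : 0 <= \sum_(u in ~: GS) ww u by apply: sumr_ge0 => u _; exact: ww_ge0.
have hber : 1 - n%:R * eps <= (1 - eps) ^+ n.
  by apply: bernoulli; rewrite eps_le1 ltW ?eps_gt0.
have hn := eps_n; have hn2 := nR_ge2; have he := eps_gt0.
set a := \sum_(u in GS) ww u in h1 hs ha.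
set b := \sum_(u in ~: GS) ww u in h2 hs hb.
rewrite /ww in h1 h2 *.
have hb2 : b <= n%:R * eps by lra.
have : n%:R * b <= n%:R * (n%:R * eps) by rewrite ler_wpM2l // ler0n.
rewrite expr2 in hn.
have : b * n%:R = n%:R * b by rewrite mulrC.
nra.
Qed.

Lemma E_opt_pos : 0 < mrf_expect Om psi1 EE psiE (opt_cost dd ff).
Proof.
rewrite expectE.
have h : \sum_(u : arr) ww u * 1 <= \sum_(u : arr) ww u * opt_cost dd ff u.
  by apply: ler_sum => u _; rewrite ler_wpM2l ?ww_ge0 ?opt_ge1.
have e : \sum_(u : arr) ww u * 1 = 1.
  by rewrite -[RHS]Zsum; apply: eq_bigr => u _; rewrite mulr1.
rewrite e in h; rewrite /ww in h; apply: lt_le_trans h; exact: ltr01.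
Qed.

Lemma LamE : Lam = ln (m%:R) *+ (5 * m + 4).
Proof.
rewrite /Lam /eps invrK /cT card_ffun !card_ord nE -natrX -natrM.
have -> : (m ^ m * (gam ^ m.+1) ^ 2 = m ^ (5 * m + 4))%N.
  rewrite /gam expnMn -expnD -expnM -expnD; congr (m ^ _)%N; lia.
by rewrite natrX lnXn // ltr0n.
Qed.

Lemma ln_half : 1 / 2 <= ln (2 : R).
Proof.
have h := expR_ge1Dx (- (1 / 2) : R).
rewrite expRN in h.
have x0 := expR_gt0 (1 / 2 : R).
set x := expR (1 / 2 : R) in h x0.
have hx : x <= 2.
  have hxi : x * x^-1 = 1 by rewrite mulfV // gt_eqF.
  have hi : 1 / 2 <= x^-1 by lra.
  have : 1 / 2 * x <= x^-1 * x by rewrite ler_wpM2r // ltW.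
  rewrite mulVf ?gt_eqF //; lra.
have : ln x <= ln 2 by rewrite ler_ln ?posrE //; lra.
by rewrite /x expRK.
Qed.

Lemma ln_m_ge : 1 / 2 <= ln (m%:R : R).
Proof.
apply: le_trans ln_half _.
have h2 : (2 : R) <= m%:R by rewrite (ler_nat R 2).
have p2 : (2 : R) \in Num.pos by rewrite posrE ltr0n.
have pm : (m%:R : R) \in Num.pos by rewrite posrE ltr0n.
by rewrite ler_ln.
Qed.
End Inst.

Theorem corollary5p4 (R : realType) :
  exists c : R, 0 < c /\
  forall D0 : R,
  exists (n : nat) (T : finType) (d : T -> T -> R) (f : T -> R)
         (Om : 'I_n -> {set T}) (psi1 : 'I_n -> T -> R)
         (E : {set {set 'I_n}}) (psiE : {set 'I_n} -> {ffun 'I_n -> T} -> R),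
    [/\ is_metric d, (forall x, 0 <= f x), (forall i, Om i != finset.set0),
        psi_local psiE &
        let Delta := mrf_Delta Om E psiE in
        let EOPT := mrf_expect Om psi1 E psiE (opt_cost d f) in
        [/\ D0 <= Delta, 1 < Delta, 0 < EOPT &
            (* every randomized online algorithm: a probability distribution mu
               over deterministic online algorithms A s *)
            forall (S : finType) (mu : S -> R) (A : S -> online_alg T n),
              (forall s, 0 <= mu s) -> \sum_(s : S) mu s = 1 ->
              c * (Delta / ln Delta) * EOPT
                <= \sum_(s : S) mu s * mrf_expect Om psi1 E psiE (alg_cost d f (A s))]].
Proof.
exists (1 / 432); split; first by rewrite divr_gt0.
move=> D0.
set p := Num.Def.archi_bound `|D0|.
have hp : D0 <= (p.+4)%:R.
  have h1 := archi_boundP (normr_ge0 D0).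
  have h2 := ler_norm D0.
  have h3 : (p%:R : R) <= (p.+4)%:R by rewrite ler_nat; lia.
  rewrite -/p in h1; lra.
exists (NN p).+1, (TT p), (@dd R p), (@ff R p), (@Om p), (@psi1 R p), (EE p), (@psiE R p).
split.
- exact: dd_metric.
- by move=> x; rewrite /ff ler01.
- by move=> i; apply/set0Pn; exists 0; rewrite /Om inE.
- exact: psi_loc.
cbv zeta.
set Delta := mrf_Delta _ _ _.
set EOPT := mrf_expect _ _ _ _ (opt_cost _ _).
have hD1 : Lam R p <= Delta := Delta_ge R p.
have hD2 : Delta <= Lam R p *+ 2 := Delta_le R p.
have hL := LamE R p.
have hl := ln_m_ge R p.
set l := ln (p.+4%:R : R) in hL hl.
set M := (p.+4%:R : R) in hp hl hL *.
have M4 : 4 <= M by rewrite /M (ler_nat R 4).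
have eL : Lam R p = l * (5 * M + 4).
  by rewrite hL /M -natrM -natrD mulr_natr.
have hLM : M <= Lam R p by rewrite eL; nra.
have hDM : M <= Delta by lra.
have hO1 : EOPT <= 4 := E_opt R p.
have hO0 : 0 < EOPT := E_opt_pos R p.
have hlnD : l <= ln Delta.
  rewrite /l -/M ler_ln ?posrE //; lra.
have hl0 : 0 < l by lra.
have hq : Delta / ln Delta <= 18 * M.
  rewrite ler_pdivrMr; last by lra.
  have : 2 * (l * (5 * M + 4)) <= 18 * M * l by nra.
  have : 18 * M * l <= 18 * M * ln Delta by rewrite ler_wpM2l //; lra.
  rewrite mulr2n in hD2; lra.
have hq0 : 0 <= Delta / ln Delta by rewrite divr_ge0 //; lra.
split.
- lra.
- lra.
- exact: hO0.
move=> S mu A hmu hsum.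
have hE : \sum_(s : S) mu s * (M / 6) <= \sum_(s : S) mu s * mrf_expect (@Om p) (@psi1 R p) (EE p) (@psiE R p) (alg_cost (@dd R p) (@ff R p) (A s)).
  by apply: ler_sum => s _; rewrite ler_wpM2l // E_alg.
rewrite -mulr_suml hsum mul1r in hE.
apply: le_trans hE.
have : Delta / ln Delta * EOPT <= 18 * M * 4.
  apply: le_trans (_ : 18 * M * EOPT <= _); first by rewrite ler_wpM2r //; lra.
  rewrite ler_wpM2l //; lra.
lra.
Qed.
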